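(* Let $\Pi$ be a problem with input in the black-white formalism. Suppose all node degrees are at most $\Delta$ and $\Pi$ has at most $L$ output labels. Suppose $\Pi$ cannot be solved in $0$ rounds by a deterministic white algorithm in the PN model, even if a solution of a problem $\Pi_{\mathrm{in}}$ is given as input. Then every randomized $0$-round white algorithm for $\Pi$, given a solution of $\Pi_{\mathrm{in}}$ as input, fails with probability at least $1/L^{\Delta^2}$.
   Context: A problem with input in the black-white formalism is $(\Sigma_{\mathrm{in}},\Sigma_{\mathrm{out}},\mathcal{N}=(\mathcal{N}^1,\dots,\mathcal{N}^\Delta),\mathcal{E}=(\mathcal{E}^1,\dots,\mathcal{E}^\delta),g)$. Here: - $\mathcal{N}^i$ and $\mathcal{E}^i$ are sets of cardinality-$i$ multisets of output labels, giving the allowed label multisets around white, resp. black, nodes of degree $i$; - $g:\Sigma_{\mathrm{in}}\to2^{\Sigma_{\mathrm{out}}}$ restricts the output on an edge given its input label. Instances are $2$-colored bipartite graphs with input labels on edges. ''Given a solution of $\Pi_{\mathrm{in}}$'' (where $\Pi_{\mathrm{in}}$ is a problem without inputs whose outputs are in $\Sigma_{\mathrm{in}}$) means the input labels form a valid solution of $\Pi_{\mathrm{in}}$. A $0$-round white algorithm in the PN model lets each white node choose output labels on its incident edges knowing only its degree, its port numbering and its incident input labels; in the randomized case it may also use private random bits. Failing means some constraint is violated, in particular at some black node, on some instance. *)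

(* Defs.v *)
From mathcomp Require Import all_boot all_order all_algebra.
Set Implicit Arguments.
Unset Strict Implicit.
Unset Printing Implicit Defensive.
Import Order.TTheory GRing.Theory Num.Theory.

(* A multiset over a finite label set, represented by its multiplicity
   function; its cardinality is the sum of the multiplicities. *)
Definition mset (T : finType) := {ffun T -> nat}.

(* A problem without inputs in the black-white formalism over labels Sig:
   [white_c] (resp. [black_c]) is the union of the sets N^i (resp. E^i),
   i.e. the allowed multisets of labels around a white (resp. black) node,
   the degree of the node being the cardinality of the multiset. *)
Record bw_problem (Sig : finType) := BWProblem {
  white_c : pred (mset Sig);
  black_c : pred (mset Sig) }.

Record problem_in (Sin Sout : finType) := ProblemIn {
  out_pb : bw_problem Sout;
  gmap : Sin -> {set Sout} }.

(* A finite 2-coloured bipartite graph given by its edges, each with a white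
   and a black endpoint, together with a port numbering of white nodes:
   [ports v] lists the edges incident to v, the port of edge e at v being
   its index in [ports v]. *)
Record pn_graph := PNGraph {
  White : finType;
  Black : finType;
  Edge : finType;
  wend : Edge -> White;
  bend : Edge -> Black;
  ports : White -> seq Edge }.

Section Defs.
Variable G : pn_graph.

Definition wdeg (v : White G) := #|[set e | wend e == v]|.
Definition bdeg (u : Black G) := #|[set e | bend e == u]|.

Definition well_formed (Delta : nat) : Prop :=
  injective (fun e : Edge G => (wend e, bend e)) /\
  (forall v : White G, uniq (ports v) /\ forall e : Edge G, (e \in ports v) = (wend e == v)) /\
  (forall v, 0 < wdeg v <= Delta) /\
  (forall u, 0 < bdeg u <= Delta).

Definition wmset (T : finType) (lab : Edge G -> T) (v : White G) : mset T :=
  [ffun x => #|[set e | (wend e == v) && (lab e == x)]|].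
Definition bmset (T : finType) (lab : Edge G -> T) (u : Black G) : mset T :=
  [ffun x => #|[set e | (bend e == u) && (lab e == x)]|].

Definition bw_valid (T : finType) (P : bw_problem T) (lab : Edge G -> T) : bool :=
  [forall v, white_c P (wmset lab v)] && [forall u, black_c P (bmset lab u)].

Definition valid_out (Sin Sout : finType) (Pi : problem_in Sin Sout)
    (inp : Edge G -> Sin) (out : Edge G -> Sout) : bool :=
  [forall e, out e \in gmap Pi (inp e)] && bw_valid (out_pb Pi) out.

Definition input_tuple (Sin : finType) (inp : Edge G -> Sin) (v : White G) :=
  map_tuple inp (in_tuple (ports v)).

End Defs.

(* Deterministic 0-round white algorithm in PN: a white node of degree d
   maps its incident input labels (in port order) to its outputs (in port order). *)
Definition det_alg (Sin Sout : finType) := forall d, d.-tuple Sin -> d.-tuple Sout.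

Definition det_output (G : pn_graph) (Sin Sout : finType) (A : det_alg Sin Sout)
    (inp : Edge G -> Sin) (out : Edge G -> Sout) : Prop :=
  forall v : White G, map_tuple out (in_tuple (ports v)) = A _ (input_tuple inp v).

Definition det_solves (Sin Sout : finType) (Delta : nat) (Pi : problem_in Sin Sout)
    (Piin : bw_problem Sin) (A : det_alg Sin Sout) : Prop :=
  forall (G : pn_graph) (inp : Edge G -> Sin), well_formed G Delta ->
    bw_valid Piin inp ->
    forall out : Edge G -> Sout, det_output A inp out -> valid_out Pi inp out.

(* Randomized 0-round white algorithm: a white node of degree d with incident
   inputs s draws its tuple of outputs from the distribution mu d s, using
   private randomness (independently of all other nodes). *)
Definition rand_alg (R : realFieldType) (Sin Sout : finType) :=
  forall d, d.-tuple Sin -> {ffun d.-tuple Sout -> R}.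

Definition is_rand_alg (R : realFieldType) (Sin Sout : finType) (mu : rand_alg R Sin Sout) :=
  forall d (s : d.-tuple Sin),
    ((forall t, 0 <= mu d s t) /\ \sum_t mu d s t = 1)%R.

Definition fail_prob (R : realFieldType) (Sin Sout : finType) (Pi : problem_in Sin Sout)
    (mu : rand_alg R Sin Sout) (G : pn_graph) (inp : Edge G -> Sin) : R :=
  (\sum_(out : {ffun Edge G -> Sout} | ~~ valid_out Pi inp out)
     \prod_(v : White G) mu _ (input_tuple inp v) (map_tuple out (in_tuple (ports v))))%R.

(* Main.v *)
Require Import Defs.
From mathcomp Require Import all_boot all_order all_algebra.
From Stdlib Require Import Classical_Prop.
Import Order.TTheory GRing.Theory Num.Theory.

Section Helpers.
Local Open Scope ring_scope.

Section Fact.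
Variables (R : comPzRingType) (I E S : finType) (w : E -> I) (f0 : E -> S).

Definition locQ (i : I) (g : {ffun E -> S}) : bool :=
  [forall e, (w e != i) ==> (g e == f0 e)].
Definition locf (i : I) (f : {ffun E -> S}) : {ffun E -> S} :=
  [ffun e => if w e == i then f e else f0 e].

Lemma fact_sum (F : I -> {ffun E -> S} -> R) :
  (forall i (f g : {ffun E -> S}), (forall e, w e = i -> f e = g e) -> F i f = F i g) ->
  \sum_(f : {ffun E -> S}) \prod_i F i f = \prod_i \sum_(g | locQ i g) F i g.
Proof.
move=> Hloc.
rewrite bigA_distr_big_dep.
rewrite (reindex (fun f : {ffun E -> S} => [ffun i => locf i f])) /=.
  apply: eq_big => [f|f _].
    apply/esym/familyP => i; rewrite ffunE; apply/forallP => e; rewrite ffunE.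
    by apply/implyP => /negPf ->.
  apply: eq_bigr => i _; rewrite ffunE; apply: Hloc => e <-.
  by rewrite ffunE eqxx.
exists (fun phi : {ffun I -> {ffun E -> S}} => [ffun e => phi (w e) e]).
  move=> f _; apply/ffunP => e; by rewrite !ffunE eqxx.
move=> phi /familyP Hphi; apply/ffunP => i; rewrite ffunE.
apply/ffunP => e; rewrite !ffunE.
case: eqP => [<- //|/eqP ne].
have /forallP /(_ e) := Hphi i.
by rewrite ne /= => /eqP ->.
Qed.
End Fact.

Lemma ex_maxR (T : finType) (R : realDomainType) (F : T -> R) (t0 : T) :
  exists t, [forall t', F t' <= F t].
Proof.
have tr : transitive (fun x y : R => y <= x).
  by move=> y x z /= hxy hyz; exact: le_trans hyz hxy.
have tt : total (fun x y : R => y <= x).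
  by move=> x y /=; rewrite orbC le_total.
case: (@extremumP _ _ (fun x y : R => y <= x) t0 predT F _ tr tt) => //.
move=> i _ H; exists i; apply/forallP => t; exact: H.
Qed.

Lemma sub_le_sum (T : finType) (R : numDomainType) (P Q : pred T) (F : T -> R) :
  (forall x, P x -> Q x) -> (forall x, Q x -> 0 <= F x) ->
  \sum_(x | P x) F x <= \sum_(x | Q x) F x.
Proof.
move=> PQ F0; rewrite [X in _ <= X](bigID P) /=.
rewrite (eq_bigl P); last by move=> x; case Px: (P x); rewrite ?andbF ?andbT ?PQ.
rewrite lerDl; apply: sumr_ge0 => x /andP [Qx _]; exact: F0.
Qed.

Lemma map_nth_index (T S : eqType) (s : seq T) (t : seq S) (d : T -> S) :
  uniq s -> size t = size s ->
  map (fun e => nth (d e) t (index e s)) s = t.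
Proof.
move=> us st; case: s us st => [|x0 s'] us st.
  by case: t st.
apply: (@eq_from_nth _ (d x0)); first by rewrite size_map st.
move=> i; rewrite size_map => hi.
rewrite (nth_map x0) // index_uniq //.
by apply: set_nth_default; rewrite st.
Qed.

End Helpers.

Lemma card_ports (G : pn_graph) Delta (wf : well_formed G Delta) (v : White G) :
  size (ports v) = wdeg v.
Proof.
case: wf => _ [Hp _]; case: (Hp v) => u m.
rewrite /wdeg -(card_uniqP u); apply: eq_card => e; by rewrite inE m.
Qed.

Theorem mainTheorem6 (Sin Sout : finType) (Pi : problem_in Sin Sout)
    (Piin : bw_problem Sin) (Delta L : nat) :
  #|Sout| <= L ->
  (forall A : det_alg Sin Sout, ~ det_solves Delta Pi Piin A) ->
  forall (R : realFieldType) (mu : rand_alg R Sin Sout), is_rand_alg mu ->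
  exists (G : pn_graph) (inp : Edge G -> Sin),
    [/\ well_formed G Delta, bw_valid Piin inp &
        (1 / (L%:R ^+ (Delta ^ 2)) <= fail_prob Pi mu inp)%R].
Proof.
move=> HL Hnot R mu Hmu.
have ex_max : forall d (s : d.-tuple Sin), exists t : d.-tuple Sout,
    [forall t', (mu d s t' <= mu d s t)%R].
  move=> d s; have [H0 H1] := Hmu d s.
  case: (pickP (@predT (d.-tuple Sout))) => [t0 _|Hn]; last first.
    by exfalso; move: H1; rewrite big_pred0 // => /eqP; rewrite eq_sym oner_eq0.
  exact: ex_maxR t0.
pose A : det_alg Sin Sout := fun d s => xchoose (ex_max d s).
have HA : forall d s t, (mu d s t <= mu d s (A d s))%R.
  by move=> d s t; have /forallP := xchooseP (ex_max d s); apply.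
have HA1 : forall d s, (1 <= (#|Sout| ^ d)%:R * mu d s (A d s))%R.
  move=> d s; rewrite -[X in (X <= _)%R](proj2 (Hmu d s)).
  apply: (le_trans (ler_sum _ (fun t _ => HA d s t))).
  by rewrite sumr_const mulr_natl -card_tuple.
have [G [inp [wf [vin [out [dout bad]]]]]] : exists (G : pn_graph) (inp : Edge G -> Sin),
    well_formed G Delta /\ bw_valid Piin inp /\
    exists out : Edge G -> Sout, det_output A inp out /\ ~~ valid_out Pi inp out.
  apply: NNPP => Hc; apply: (Hnot A) => G inp wf vin out dout.
  apply/negPn/negP => bad; apply: Hc; exists G, inp; split=> //; split=> //.
  by exists out.
exists G, inp; split=> //.
have wf' := wf; case: wf' => _ [Hp [Hw Hb]].
have [W [HW [Delta1 Hagree]]] : exists W : {set White G}, (#|W| <= Delta)%N /\ (0 < Delta)%N /\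
    forall out' : Edge G -> Sout, (forall e, wend e \in W -> out' e = out e) ->
      ~~ valid_out Pi inp out'.
  move: bad; rewrite /valid_out /bw_valid negb_and => /orP [/forallPn [e He]|].
    have /andP [h1 h2] := Hw (wend e).
    exists [set wend e]; rewrite cards1; split; first exact: leq_trans h1 h2.
    split; first exact: leq_trans h1 h2.
    move=> out' Hag; rewrite negb_and; apply/orP; left; apply/forallPn; exists e.
    by rewrite Hag // inE.
  rewrite negb_and => /orP [/forallPn [v Hv]|/forallPn [u Hu]].
    have /andP [h1 h2] := Hw v.
    exists [set v]; rewrite cards1; split; first exact: leq_trans h1 h2.
    split; first exact: leq_trans h1 h2.
    move=> out' Hag; rewrite negb_and; apply/orP; right.
    rewrite negb_and; apply/orP; left; apply/forallPn; exists v.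
    suff -> : wmset out' v = wmset out v by [].
    apply/ffunP => x; rewrite !ffunE; apply: eq_card => e; rewrite !inE.
    by case H: (wend e == v) => //=; rewrite Hag // inE H.
  have /andP [h1 h2] := Hb u.
  exists [set wend e | e in [set e | bend e == u]]; split.
    exact: leq_trans (leq_imset_card _ _) h2.
  split; first exact: leq_trans h1 h2.
  move=> out' Hag; rewrite negb_and; apply/orP; right.
  rewrite negb_and; apply/orP; right; apply/forallPn; exists u.
  suff -> : bmset out' u = bmset out u by [].
  apply/ffunP => x; rewrite !ffunE; apply: eq_card => e; rewrite !inE.
  case H: (bend e == u) => //=; rewrite Hag //.
  by apply/imsetP; exists e; rewrite ?inE.
Local Open Scope ring_scope.
pose M (v : White G) (f : Edge G -> Sout) :=
  mu _ (input_tuple inp v) (map_tuple f (in_tuple (ports v))).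
have M0 : forall v f, 0 <= M v f by move=> v f; exact: (proj1 (Hmu _ _)).
pose c : R := 1 / L%:R ^+ Delta.
have Hc : forall v, c <= M v out.
  move=> v; rewrite /M dout.
  have hd : (size (ports v) <= Delta)%N.
    by rewrite (card_ports _ _ wf); case/andP: (Hw v).
  have h1 := HA1 _ (input_tuple inp v).
  have m0 := proj1 (Hmu _ (input_tuple inp v)) (A _ (input_tuple inp v)).
  case: (posnP L) => [L0|Lp].
    by rewrite /c L0 expr0n (gtn_eqF Delta1) /= mul1r invr0.
  have hN : (#|Sout| ^ size (ports v) <= L ^ Delta)%N.
    apply: leq_trans (leq_pexp2l Lp hd).
    elim: (size (ports v)) => // n IH; rewrite !expnS; exact: leq_mul.
  have hN' : (#|Sout| ^ size (ports v))%:R <= (L ^ Delta)%:R :> R by rewrite ler_nat.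
  have h2 := le_trans h1 (ler_wpM2r m0 hN').
  rewrite /c -natrX div1r -[X in X <= _]mulr1 ler_pdivrMl ?ltr0n ?expn_gt0 ?Lp //.
have c01 : 0 <= c <= 1.
  case: (posnP L) => [L0|Lp].
    by rewrite /c L0 expr0n (gtn_eqF Delta1) /= mul1r invr0 lexx ler01.
  rewrite /c div1r -natrX invr_ge0 ler0n /= invf_le1 ?ltr0n ?expn_gt0 ?Lp //.
  by rewrite ler1n expn_gt0 Lp.
case/andP: c01 => c0 c1.
rewrite /fail_prob.
apply: (@le_trans _ _ (c ^+ Delta)).
  by rewrite /c expr_div_n expr1n -exprM mulnn.
apply: (le_trans (ler_wiXn2l c0 c1 HW)).
pose agr v (f : {ffun Edge G -> Sout}) := [forall e, (wend e == v) ==> (f e == out e)].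
pose F' v (f : {ffun Edge G -> Sout}) := if v \in W then (agr v f)%:R * M v f else M v f.
have F'0 : forall v f, 0 <= F' v f.
  move=> v f; rewrite /F'; case: (v \in W) => //; exact: mulr_ge0 (ler0n _ _) (M0 _ _).
apply: (@le_trans _ _ (\sum_(f : {ffun Edge G -> Sout}) \prod_v F' v f)); last first.
  rewrite [X in X <= _](bigID (fun f : {ffun Edge G -> Sout} => ~~ valid_out Pi inp f)) /= [X in _ + X]big1 ?addr0.
    apply: ler_sum => f _; apply: ler_prod => v _; rewrite F'0 /= /F'.
    by case: (v \in W); case: (agr v f); rewrite ?mul1r ?mul0r ?lexx ?M0.
  move=> f /negPn vf; case: (boolP [forall v in W, agr v f]) => [/forallP Hall|].
    exfalso; move: vf; apply/negP; apply: Hagree => e he.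
    have := Hall (wend e); rewrite he /= => /forallP /(_ e).
    by rewrite eqxx /= => /eqP.
  move=> /forallPn [v]; rewrite negb_imply => /andP [vW /negPf nagr].
  by rewrite (bigD1 v) //= /F' vW nagr mul0r mul0r.
rewrite (@fact_sum _ _ _ _ (@wend G) out); last first.
  move=> v f g H; rewrite /F' /agr /M.
  have -> : map_tuple f (in_tuple (ports v)) = map_tuple g (in_tuple (ports v)).
    apply: val_inj => /=; apply/eq_in_map => e; rewrite (proj2 (Hp v)) => /eqP.
    exact: H.
  suff -> : [forall e, (wend e == v) ==> (f e == out e)] =
            [forall e, (wend e == v) ==> (g e == out e)] by [].
  apply: eq_forallb => e; case E: (wend e == v) => //=.
  by rewrite H //; apply/eqP.
rewrite -prodr_const big_mkcond /=.
apply: ler_prod => v _.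
case: ifP => vW; apply/andP; split => //.
  pose g0 := [ffun e => out e] : {ffun Edge G -> Sout}.
  have lg0 : @locQ _ _ _ (@wend G) out v g0 = true.
    by apply/forallP => e; rewrite ffunE eqxx implybT.
  rewrite (bigD1 g0) //= -[c]addr0; apply: lerD; last first.
    by apply: sumr_ge0 => g _; exact: F'0.
  rewrite /F' vW.
  have -> : agr v g0 = true by apply/forallP => e; rewrite ffunE eqxx implybT.
  rewrite mul1r /M.
  have -> : map_tuple g0 (in_tuple (ports v)) = map_tuple out (in_tuple (ports v)).
    by apply: val_inj; apply: eq_map => e; rewrite ffunE.
  exact: Hc.
rewrite (eq_bigr (fun g : {ffun Edge G -> Sout} => M v g)); last by move=> g _; rewrite /F' vW.
pose psi (t : (size (ports v)).-tuple Sout) : {ffun Edge G -> Sout} :=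
  [ffun e => if wend e == v then nth (out e) t (index e (ports v)) else out e].
have Mpsi : forall t, map_tuple (psi t) (in_tuple (ports v)) = t.
  move=> t; apply: val_inj => /=.
  transitivity (map (fun e => nth (out e) t (index e (ports v))) (ports v)).
    apply/eq_in_map => e; rewrite (proj2 (Hp v)) => /eqP ev.
    by rewrite ffunE ev eqxx.
  exact: map_nth_index (proj1 (Hp v)) (size_tuple t).
rewrite -[X in X <= _](proj2 (Hmu _ (input_tuple inp v))).
have -> : \sum_t mu _ (input_tuple inp v) t = \sum_(g in [set psi t | t in predT]) M v g.
  rewrite big_imset /=; last first.
    by move=> t1 t2 _ _ h; rewrite -(Mpsi t1) -(Mpsi t2) h.
  by apply: eq_bigr => t _; rewrite /M Mpsi.
apply: (@sub_le_sum _ _ (fun g => g \in [set psi t | t in predT])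
  (fun g => @locQ _ _ _ (@wend G) out v g) (fun g => M v g)) => [g /imsetP [t _ ->]|g _]; last exact: M0.
by apply/forallP => e; rewrite ffunE; apply/implyP => /negPf ->.
Qed.
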